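(* Let $p \ge 1$ and let $\mathcal{D}=\{(x_i,y_i) \mid i=1,\dots,m,\ x_i\in\mathbb{R}^d,\ y_i\in\{-1,1\}\}$ be a finite labeled dataset with $x_i \neq x_j$ whenever $y_i \neq y_j$. Let $c>0$ be a scalar such that for all $i,j$, $y_i \neq y_j$ implies $\|x_i - x_j\|_p > c$. Then there exists a function $f:\mathbb{R}^d \to \mathbb{R}$ which is $\frac{2}{c}$-Lipschitz continuous (with respect to $\|\cdot\|_p$ on $\mathbb{R}^d$ and the absolute value on $\mathbb{R}$) such that for every $i$ and every $\delta\in\mathbb{R}^d$ with $\|\delta\|_p < \frac{c}{2}$, we have $\mathrm{sign}(f(x_i+\delta)) = y_i$.
   Context: A function $f$ is $k$-Lipschitz continuous if $|f(x_1)-f(x_2)| \le k\,\|x_1-x_2\|_p$ for all $x_1,x_2$ in its domain. $\|\cdot\|_p$ denotes the usual $L_p$ (Minkowski) norm on $\mathbb{R}^d$. *)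

(* Defs.v *)
From HB Require Import structures.
From mathcomp Require Import all_boot all_order all_algebra.
From mathcomp Require Import all_classical all_reals.
From mathcomp Require Import exp.
Set Implicit Arguments. Unset Strict Implicit. Unset Printing Implicit Defensive.
Import Order.TTheory GRing.Theory Num.Theory.
Local Open Scope ring_scope.

Definition pnorm (R : realType) (d : nat) (p : R) (x : 'rV[R]_d) : R :=
  (\sum_(i < d) `|x ord0 i| `^ p) `^ p^-1.

Definition lipschitz_p (R : realType) (d : nat) (p k : R) (f : 'rV[R]_d -> R) : Prop :=
  forall x1 x2 : 'rV[R]_d, `|f x1 - f x2| <= k * pnorm p (x1 - x2).

(* Main.v *)
Require Import Defs.
From HB Require Import structures.
From mathcomp Require Import all_boot all_order all_algebra.
From mathcomp Require Import all_classical all_reals.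
From mathcomp Require Import exp all_analysis.
From mathcomp Require Import lra.
Import Order.TTheory GRing.Theory Num.Theory.
Set Implicit Arguments. Unset Strict Implicit.
Local Open Scope ring_scope.

Section mk.
Context (R : realType).
Definition extF n (a : 'I_n -> R) (k : nat) : R := oapp a 0 (insub k).

Lemma Lnorm_extF n (a : 'I_n -> R) (p : R) : 0 < p ->
  ('N[counting]_p%:E[EFin \o extF a] = ((\sum_i `|a i| `^ p) `^ p^-1)%:E)%E.
Proof.
move=> p0; rewrite Lnorm_counting //.
rewrite (nneseries_split 0 n); last by move=> k; rewrite poweR_ge0.
rewrite add0n eseries0 ?adde0; last first.
  move=> k nk _ /=; rewrite /extF insubF ?normr0 ?powR0 ?gt_eqF //=.
  by rewrite ltnNge nk.
rewrite big_mkord.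
under eq_bigr => i _ do rewrite /= /extF valK /=.
by rewrite sumEFin poweR_EFin.
Qed.
Lemma minkowski_fin n (p : R) (a b : 'I_n -> R) : 1 <= p ->
  (\sum_i `|a i + b i| `^ p) `^ p^-1 <=
  (\sum_i `|a i| `^ p) `^ p^-1 + (\sum_i `|b i| `^ p) `^ p^-1.
Proof.
move=> p1; have p0 : 0 < p by apply: lt_le_trans p1.
have := @minkowski_EFin _ _ R counting (extF a) (extF b) p ltac:(by []) ltac:(by []) p1.
have -> : (extF a \+ extF b)%R = extF (fun i => a i + b i).
  by apply: funext => k; rewrite /extF /=; case: insub => [i|] /=; rewrite ?addr0.
by rewrite !Lnorm_extF // -EFinD lee_fin.
Qed.
End mk.

Section pn.
Context (R : realType) (d : nat) (p : R) (p1 : 1 <= p).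

Lemma pnormD (u v : 'rV[R]_d) : pnorm p (u + v) <= pnorm p u + pnorm p v.
Proof.
rewrite /pnorm.
under eq_bigr => i _ do rewrite mxE.
exact: minkowski_fin.
Qed.

Lemma pnormN (u : 'rV[R]_d) : pnorm p (- u) = pnorm p u.
Proof. by rewrite /pnorm; under eq_bigr => i _ do rewrite mxE normrN. Qed.

Lemma pnorm_ge0 (u : 'rV[R]_d) : 0 <= pnorm p u.
Proof. exact: powR_ge0. Qed.

Lemma pnorm_lip (z1 z2 w : 'rV[R]_d) :
  `|pnorm p (z1 - w) - pnorm p (z2 - w)| <= pnorm p (z1 - z2).
Proof.
have h1 := pnormD (z1 - z2) (z2 - w).
have h2 := pnormD (z2 - z1) (z1 - w).
have e1 : z1 - z2 + (z2 - w) = z1 - w by rewrite addrA subrK.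
have e2 : z2 - z1 + (z1 - w) = z2 - w by rewrite addrA subrK.
have e3 : z2 - z1 = - (z1 - z2) by rewrite opprB.
rewrite e1 in h1; rewrite e2 e3 pnormN in h2.
move: h1 h2 (pnorm_ge0 (z1 - z2)).
move: (pnorm p (z1 - w)) (pnorm p (z2 - w)) (pnorm p (z1 - z2)) => A B C h1 h2 h3.
rewrite ler_norml; apply/andP; split; lra.
Qed.
End pn.

Lemma min_lip (R : realType) (a b a' b' e : R) :
  `|a - a'| <= e -> `|b - b'| <= e -> `|Num.min a b - Num.min a' b'| <= e.
Proof.
rewrite !ler_norml => /andP[h1 h2] /andP[h3 h4].
case: (leP a b) => hab; case: (leP a' b') => hab';
  rewrite ?(min_l hab) ?(min_r (ltW hab)) ?(min_l hab') ?(min_r (ltW hab'));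
  apply/andP; split; lra.
Qed.

Theorem proposition1 (R : realType) (d m : nat) (p c : R)
  (x : 'I_m -> 'rV[R]_d) (y : 'I_m -> R) :
  1 <= p ->
  (forall i, y i = 1 \/ y i = -1) ->
  (forall i j, y i != y j -> x i != x j) ->
  0 < c ->
  (forall i j, y i != y j -> pnorm p (x i - x j) > c) ->
  exists f : 'rV[R]_d -> R,
    lipschitz_p p (2 / c) f /\
    (forall (i : 'I_m) (delta : 'rV[R]_d),
        pnorm p delta < c / 2 -> Num.sg (f (x i + delta)) = y i).
Proof.
move=> p1 hy _ c0 hsep.
pose D (s : R) (z : 'rV[R]_d) :=
  \big[Order.min/(c/2)]_(j | y j == s) pnorm p (z - x j).
have Dlip s z1 z2 : `|D s z1 - D s z2| <= pnorm p (z1 - z2).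
  rewrite /D; apply: (big_ind2 (fun u v => `|u - v| <= pnorm p (z1 - z2))).
  - by rewrite subrr normr0 pnorm_ge0.
  - by move=> *; apply: min_lip.
  - by move=> j _; apply: pnorm_lip.
have Dup s z i : y i = s -> D s z <= pnorm p (z - x i).
  by move=> hi; rewrite /D; apply: bigmin_le_cond; rewrite hi.
have Dfar s z : (forall j, y j = s -> c / 2 <= pnorm p (z - x j)) -> D s z = c / 2.
  by move=> h; rewrite /D; apply: bigmin_eq_id => j /eqP; apply: h.
exists (fun z => (D (-1) z - D 1 z) / c); split.
  move=> z1 z2.
  have h1 := Dlip (-1) z1 z2; have h2 := Dlip 1 z1 z2.
  rewrite -mulrBl normrM [`|c^-1|]gtr0_norm ?invr_gt0 // [2 / c * _]mulrAC.
  rewrite ler_pM2r ?invr_gt0 //.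
  move: h1 h2; rewrite !ler_norml.
  move: (D (-1) z1) (D (-1) z2) (D 1 z1) (D 1 z2) (pnorm p (z1 - z2)) => A1 A2 B1 B2 P.
  move=> /andP[h1 h1'] /andP[h2 h2']; apply/andP; split; lra.
move=> i delta hdelta.
have far j : y i != y j -> c / 2 < pnorm p (x i + delta - x j).
  move=> hij; have := hsep i j hij.
  have := pnormD p1 (x i + delta - x j) (- delta).
  rewrite pnormN.
  have -> : x i + delta - x j + - delta = x i - x j.
    by rewrite addrAC addrK.
  move: (pnorm p (x i - x j)) (pnorm p (x i + delta - x j)) (pnorm p delta) hdelta.
  move=> A B C h0 h1 h2; lra.
have near : pnorm p (x i + delta - x i) < c / 2.
  by have -> : x i + delta - x i = delta by rewrite addrAC subrr add0r.
case: (hy i) => hi.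
  have e1 : D (-1) (x i + delta) = c / 2.
    apply: Dfar => j hj; apply/ltW/far; rewrite hi hj.
    by apply/eqP => h; lra.
  have := Dup 1 (x i + delta) i hi.
  rewrite e1 hi => h; apply: gtr0_sg.
  apply: divr_gt0 => //; move: h near.
  move: (D 1 (x i + delta)) (pnorm p (x i + delta - x i)) => A B h0 h1; lra.
have e1 : D 1 (x i + delta) = c / 2.
  apply: Dfar => j hj; apply/ltW/far; rewrite hi hj.
  by apply/eqP => h; lra.
have := Dup (-1) (x i + delta) i hi.
rewrite e1 hi => h; apply: ltr0_sg.
rewrite pmulr_llt0 ?invr_gt0 //; move: h near.
move: (D (-1) (x i + delta)) (pnorm p (x i + delta - x i)) => A B h0 h1; lra.
Qed.
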